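(* Let $r$ and $d$ be positive integers, let $\operatorname{Tv}(d,r)=(d+1)(r-1)+1$, and let $S$ be a set of $n>\operatorname{Tv}(d,r)$ points in $\mathbb{R}^d$. Then every vertex $v$ of the Tverberg $r$-partition graph $G_T[S,r]$ satisfies \[\big(n+1-\operatorname{Tv}(d,r)\big)(r-1)\le \deg(v)\le n(r-1).\]
   Context: A partition of a finite set $S$ into $r$ parts is a collection of $r$ nonempty pairwise disjoint subsets $P_1,\dots,P_r$ (unordered) whose union is $S$. For a finite $S\subset\mathbb{R}^d$, a Tverberg partition of $S$ into $r$ parts is a partition $P_1,\dots,P_r$ of $S$ into $r$ parts with $\bigcap_{j=1}^r\operatorname{conv}(P_j)\neq\emptyset$. For two partitions $P,P'$ of $S$, the partition distance $D(P,P')$ is the minimum number of elements of $S$ that must be removed so that $P$ and $P'$ restricted to the remaining elements coincide. The Tverberg $r$-partition graph $G_T[S,r]$ has as vertices all Tverberg partitions of $S$ into $r$ parts, with an edge between $P$ and $P'$ if and only if $D(P,P')=1$. *)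

(* Defs.v *)
(* Points of S are indexed by 'I_n via an injective map
   p : 'I_n -> 'rV[R]_d (R : realType models the reals). *)
From mathcomp Require Import all_boot all_order all_algebra.
From mathcomp Require Import boolp reals.
Set Implicit Arguments. Unset Strict Implicit. Unset Printing Implicit Defensive.
Import Order.TTheory GRing.Theory Num.Theory.
Local Open Scope ring_scope.

Section Tverberg.
Variables (R : realType) (d n : nat) (p : 'I_n -> 'rV[R]_d).

Definition in_conv (A : {set 'I_n}) (x : 'rV[R]_d) : Prop :=
  exists w : 'I_n -> R,
    [/\ forall i, 0 <= w i,
        forall i, i \notin A -> w i = 0,
        \sum_i w i = 1
      & x = \sum_i w i *: p i].

Definition is_rpartition (r : nat) (P : {set {set 'I_n}}) : bool :=
  partition P [set: 'I_n] && (#|P| == r)%N.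

Definition tverberg_partition (r : nat) (P : {set {set 'I_n}}) : Prop :=
  is_rpartition r P /\ exists x : 'rV[R]_d, forall B, B \in P -> in_conv B x.

End Tverberg.

Definition restr_part n (T : {set 'I_n}) (P : {set {set 'I_n}}) : {set {set 'I_n}} :=
  [set B :&: T | B in P] :\ set0.

Definition part_dist n (P Q : {set {set 'I_n}}) : nat :=
  #|[arg min_(X < [set: 'I_n] | restr_part (~: X) P == restr_part (~: X) Q) #|X| ]|.

Definition tv_degree (R : realType) d n (p : 'I_n -> 'rV[R]_d) (r : nat)
  (P : {set {set 'I_n}}) : nat :=
  #|[set Q : {set {set 'I_n}} | `[< tverberg_partition p r Q >] && (part_dist P Q == 1)%N]|.

Definition Tv (d r : nat) : nat := ((d.+1) * (r - 1)).+1.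

(* Main.v *)
Require Import Defs.
From mathcomp Require Import all_boot all_order all_algebra.
From mathcomp Require Import reals.
From mathcomp Require Import boolp zify.
Set Implicit Arguments. Unset Strict Implicit. Unset Printing Implicit Defensive.
Import Order.TTheory GRing.Theory Num.Theory.

Section Comb.
Variable n : nat.
Implicit Types (f g : 'I_n -> {set 'I_n}) (P Q : {set {set 'I_n}}).

Lemma PP_eq f g (D : {set 'I_n}) :
  {in D &, forall x y, (f x == f y) = (g x == g y)} ->
  preim_partition f D = preim_partition g D.
Proof.
move=> H; rewrite /preim_partition /equivalence_partition.
apply: eq_in_imset => x Dx; apply/setP => y; rewrite !inE.
by case Dy: (y \in D) => //=; apply: H.
Qed.

Lemma PP_rel f g (D : {set 'I_n}) :
  preim_partition f D = preim_partition g D ->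
  {in D &, forall x y, (f x == f y) = (g x == g y)}.
Proof.
move=> E x y Dx Dy.
have : [set z in D | f x == f z] \in preim_partition g D.
  by rewrite -E; apply: imset_f.
case/imsetP => z Dz Ez.
have : x \in [set z in D | f x == f z] by rewrite inE Dx eqxx.
rewrite Ez inE => /andP[_ /eqP gzx].
move/setP: Ez => /(_ y); rewrite !inE Dy /= => ->.
by rewrite gzx.
Qed.

Lemma restr_preim f (T : {set 'I_n}) :
  restr_part T (preim_partition f setT) = preim_partition f T.
Proof.
apply/setP => C; rewrite /restr_part /preim_partition /equivalence_partition.
apply/idP/idP.
- rewrite !inE => /andP[C0 /imsetP[B /imsetP[x _ EB] EC]]; subst C B.
  case/set0Pn: C0 => y; rewrite !inE => /andP[/eqP fxy Ty].
  apply/imsetP; exists y => //; apply/setP => z; rewrite !inE fxy.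
  by rewrite andbC.
- case/imsetP => x Tx ->; rewrite !inE; apply/andP; split.
    by apply/set0Pn; exists x; rewrite !inE Tx eqxx.
  apply/imsetP; exists [set y in setT | f x == f y]; first by apply: imset_f.
  by apply/setP => z; rewrite !inE andbC.
Qed.

Lemma card_ppart f : #|preim_partition f setT| = #|f @: setT|.
Proof.
rewrite /preim_partition /equivalence_partition.
have -> : [set [set y in setT | f x == f y] | x in setT] =
          (fun v => [set y | v == f y]) @: (f @: setT).
  rewrite -imset_comp; apply: eq_imset => x /=.
  by apply/setP => y; rewrite !inE.
apply: card_in_imset => _ _ /imsetP[a _ ->] /imsetP[b _ ->] E.
have : a \in [set y | f a == f y] by rewrite inE.
by rewrite E inE => /eqP.
Qed.

Lemma restr_setT P : set0 \notin P -> restr_part setT P = P.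
Proof.
move=> P0; apply/setP => C; rewrite /restr_part !inE.
apply/idP/idP.
- by case/andP => _ /imsetP[B PB ->]; rewrite setIT.
- move=> PC; apply/andP; split.
    by apply: contraNneq P0 => <-.
  by apply/imsetP; exists C; rewrite ?setIT.
Qed.

End Comb.

Lemma restr0 n (P : {set {set 'I_n}}) : restr_part set0 P = set0.
Proof.
apply/setP => C; rewrite /restr_part !inE.
apply/andP => -[C0 /imsetP[B _ EC]]; by rewrite EC setI0 eqxx in C0.
Qed.

Lemma part_dist_spec n (P Q : {set {set 'I_n}}) :
  exists X : {set 'I_n}, [/\ part_dist P Q = #|X|,
     restr_part (~: X) P = restr_part (~: X) Q &
     forall Y : {set 'I_n}, restr_part (~: Y) P = restr_part (~: Y) Q -> #|X| <= #|Y|].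
Proof.
rewrite /part_dist.
case: arg_minnP; first by rewrite setCT !restr0.
move=> X /eqP HX Hmin; exists X; split => // Y HY; apply: Hmin; exact/eqP.
Qed.

Section Lab.
Variable n : nat.
Variable P : {set {set 'I_n}}.
Hypothesis hP : partition P setT.

Let tiP : trivIset P. Proof. by case/and3P: hP. Qed.
Let P0 : set0 \notin P. Proof. by case/and3P: hP. Qed.
Let covP x : x \in cover P. Proof. by case/and3P: hP => /eqP -> _ _; rewrite inE. Qed.

Lemma pb_mem x : pblock P x \in P. Proof. exact: pblock_mem. Qed.
Lemma pb_in x : x \in pblock P x. Proof. by rewrite mem_pblock. Qed.
Lemma pb_def B x : B \in P -> x \in B -> pblock P x = B. Proof. exact: def_pblock. Qed.
Lemma P_preim : preim_partition (pblock P) setT = P.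
Proof. exact: preim_partition_pblock. Qed.
Lemma P_nonempty B : B \in P -> exists b, b \in B.
Proof. by move=> PB; case/set0Pn: (memPn P0 B PB) => b Hb; exists b. Qed.

Definition lab (i : 'I_n) (B : {set 'I_n}) k := if k == i then B else pblock P k.

Lemma lab_img i B a : B \in P -> a != i -> pblock P a = pblock P i ->
  lab i B @: setT = P.
Proof.
move=> PB ai Ea; apply/setP => V; apply/imsetP/idP.
- by case=> k _ ->; rewrite /lab; case: eqP => _ //; apply: pb_mem.
- move=> PV; case: (P_nonempty PV) => v Vv.
  have Ev := pb_def PV Vv.
  case: (eqVneq v i) => [vi|vi].
  + subst v; exists a => //; by rewrite /lab (negbTE ai) Ea.
  + by exists v => //; rewrite /lab (negbTE vi).
Qed.

Lemma move_dist i B a : B \in P -> i \notin B -> a != i ->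
  pblock P a = pblock P i -> part_dist P (preim_partition (lab i B) setT) = 1%N.
Proof.
move=> PB iB ai Ea.
have agree : {in ~: [set i] &, forall x y,
    (pblock P x == pblock P y) = (lab i B x == lab i B y)}.
  move=> x y; rewrite !inE /lab => /negbTE -> /negbTE -> //.
have BPi : B != pblock P i by apply: contraNneq iB => ->; apply: pb_in.
case: (part_dist_spec P (preim_partition (lab i B) setT)) => X [-> HX Hmin].
have : (#|X| <= 1)%N.
  rewrite -(cards1 i); apply: Hmin.
  by rewrite -{1}P_preim !restr_preim; apply: PP_eq.
case: (posnP #|X|) => [/eqP|]; last by case: #|X| => [|[|]].
rewrite cards_eq0 => /eqP X0; subst X.
move: HX; rewrite setC0 restr_setT // restr_setT; last first.
  by case/and3P: (preim_partitionP (lab i B) setT).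
rewrite -{1}P_preim => /PP_rel /(_ a i) .
rewrite !inE /lab (negbTE ai) eqxx Ea eqxx => /(_ isT isT) /esym /eqP.
by move=> E; rewrite E eqxx in BPi.
Qed.

Lemma move_inj i j B B' a :
  B \in P -> i \notin B -> a != i -> pblock P a = pblock P i ->
  B' \in P -> j \notin B' ->
  preim_partition (lab i B) setT = preim_partition (lab j B') setT ->
  i = j /\ B = B'.
Proof.
move=> PB iB ai Ea PB' jB' /PP_rel R.
have BPi : B != pblock P i by apply: contraNneq iB => ->; apply: pb_in.
case: (P_nonempty PB) => b Bb.
have Eb := pb_def PB Bb.
have bi : b != i by apply: contraNneq iB => <-.
have Rbi := R b i; rewrite !inE /lab eqxx (negbTE bi) Eb eqxx in Rbi.
have Rbi' := Rbi isT isT.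
case: (eqVneq i j) => [ij|ij].
  by subst j; move: Rbi'; rewrite (negbTE bi) eqxx => /esym /eqP.
have Rai := R a i; rewrite !inE /lab (negbTE ai) Ea eqxx (negbTE ij) in Rai.
have Rai' := Rai isT isT; rewrite eq_sym (negbTE BPi) in Rai'.
case: (eqVneq a j) => [aj|aj]; last by rewrite (negbTE aj) eqxx in Rai'.
subst j.
have ba : b != a by apply: contraNneq BPi => ba; rewrite -Eb ba Ea.
move: Rbi'; rewrite (negbTE ba) (negbTE ij) => /esym /eqP E; by rewrite E eqxx in BPi.
Qed.

Lemma move_char (Q : {set {set 'I_n}}) :
  partition Q setT -> #|Q| = #|P| -> part_dist P Q = 1%N ->
  exists i B, B \in P :\ pblock P i /\ Q = preim_partition (lab i B) setT.
Proof.
move=> hQ cQ dPQ.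
case: (part_dist_spec P Q) => X [HD HX Hmin].
move: HD; rewrite dPQ => /esym /eqP /cards1P [i Xi]; subst X.
have HQ := preim_partition_pblock hQ.
have [_ tiQ Q0] := and3P hQ.
have relT : {in ~: [set i] &, forall x y,
    (pblock P x == pblock P y) = (pblock Q x == pblock Q y)}.
  apply: PP_rel.
  rewrite -(restr_preim (pblock P)) -(restr_preim (pblock Q)) P_preim HQ //.
have QneP : Q != P.
  apply/negP => /eqP E; have := Hmin set0; rewrite E => /(_ erefl).
  by rewrite cards1 cards0.
have fromrel : forall g : 'I_n -> {set 'I_n},
    (forall x y, x != i -> y != i -> (pblock P x == pblock P y) = (g x == g y)) ->
    (forall y, y != i -> (pblock Q i == pblock Q y) = (g i == g y)) ->
    Q = preim_partition g setT.
  move=> g H1 H2; rewrite -HQ; apply: PP_eq => x y _ _.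
  case: (eqVneq x i) => [->|xi]; case: (eqVneq y i) => [->|yi].
  - by rewrite !eqxx.
  - exact: H2.
  - by rewrite eq_sym H2 // eq_sym.
  - by rewrite -H1 // relT // !inE.
case: (boolP [exists y0, (y0 != i) && (pblock Q i == pblock Q y0)]).
  case/existsP => y0 /andP[y0i /eqP Qy0].
  case: (eqVneq (pblock P y0) (pblock P i)) => [Py0|Py0].
    suff : Q = P by move=> E; rewrite E eqxx in QneP.
    rewrite -[X in _ = X]P_preim; apply: fromrel => // y yi.
    by rewrite Qy0 -relT ?inE // Py0.
  exists i, (pblock P y0); split; first by rewrite !inE Py0 pb_mem.
  apply: fromrel => [x y xi yi|y yi]; first by rewrite /lab (negbTE xi) (negbTE yi).
  by rewrite /lab eqxx (negbTE yi) Qy0 -relT ?inE.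
rewrite negb_exists => /forallP Hno.
have Hno' y : y != i -> (pblock Q i == pblock Q y) = false.
  by move=> yi; have := Hno y; rewrite yi /= => /negbTE.
case: (boolP [exists a, (a != i) && (pblock P a == pblock P i)]); last first.
  rewrite negb_exists => /forallP Hno2.
  suff : Q = P by move=> E; rewrite E eqxx in QneP.
  rewrite -[X in _ = X]P_preim; apply: fromrel => // y yi.
  rewrite Hno' //; apply/esym; have := Hno2 y; rewrite yi /= eq_sym.
  by move/negbTE.
case/existsP => a /andP[ai /eqP Ea].
have EQ : Q = preim_partition (lab i set0) setT.
  apply: fromrel => [x y xi yi|y yi]; first by rewrite /lab (negbTE xi) (negbTE yi).
  rewrite Hno' // /lab eqxx (negbTE yi); apply/esym/eqP => E.
  by move: (pb_mem y); rewrite -E (negbTE P0).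
have Img : lab i set0 @: setT = set0 |: P.
  apply/setP => V; rewrite !inE; apply/imsetP/idP.
  - case=> k _ ->; rewrite /lab; case: (k == i) => /=; first by rewrite eqxx.
    by rewrite pb_mem orbT.
  - case/orP => [/eqP ->|PV]; first by exists i; rewrite // /lab eqxx.
    case: (P_nonempty PV) => v Vv; have Ev := pb_def PV Vv.
    case: (eqVneq v i) => [vi|vi].
    + subst v; exists a => //; by rewrite /lab (negbTE ai) Ea.
    + by exists v => //; rewrite /lab (negbTE vi).
have := card_ppart (lab i set0); rewrite -EQ Img cardsU1 P0 cQ /=.
move=> E; exfalso; move: E; rewrite add1n => /n_Sn. done.
Qed.

End Lab.

Section Geo.
Local Open Scope ring_scope.
Variables (R : realType) (d n : nat) (p : 'I_n -> 'rV[R]_d).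

Definition feas (g : 'I_n -> {set 'I_n}) (l : 'I_n -> R) (x : 'rV[R]_d) :=
  [/\ forall k, 0 <= l k,
      forall j, \sum_(k | g k == g j) l k = 1 &
      forall j, \sum_(k | g k == g j) l k *: p k = x].

Definition kern (g : 'I_n -> {set 'I_n}) (m : 'I_n -> R) (y : 'rV[R]_d) :=
  (forall j, \sum_(k | g k == g j) m k = 0) /\
  (forall j, \sum_(k | g k == g j) m k *: p k = y).

Lemma G_fin g l x : feas g l x ->
  forall C, C \in preim_partition g setT -> in_conv p C x.
Proof.
case=> l0 l1 lx C /imsetP[j _ ->].
exists (fun k => if g j == g k then l k else 0); split.
- by move=> k; case: ifP.
- by move=> k; rewrite !inE /=; case: ifP.
- by rewrite -(l1 j) [RHS]big_mkcond; apply: eq_bigr => k _; rewrite eq_sym.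
- rewrite -(lx j) big_mkcond; apply: eq_bigr => k _; rewrite eq_sym.
  by case: ifP => //; rewrite scale0r.
Qed.

Lemma G_init (P : {set {set 'I_n}}) : partition P setT ->
  (exists x, forall B, B \in P -> in_conv p B x) ->
  exists l x, feas (pblock P) l x.
Proof.
move=> hP [x Hx].
have : forall B : {set 'I_n}, exists w : 'I_n -> R, B \in P ->
   [/\ forall i, 0 <= w i, forall i, i \notin B -> w i = 0,
       \sum_i w i = 1 & x = \sum_i w i *: p i].
  move=> B; case: (boolP (B \in P)) => PB; last by exists (fun _ => 0).
  by case: (Hx B PB) => w Hw; exists w.
case/choice => W HW.
exists (fun k => W (pblock P k) k), x; split.
- by move=> k; case: (HW _ (pb_mem hP k)).
- move=> j; case: (HW _ (pb_mem hP j)) => _ W0 W1 _.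
  rewrite -W1 big_mkcond; apply: eq_bigr => k _.
  case: eqP => [->//|/eqP kj]; rewrite W0 //.
  by apply: contra kj => kin; rewrite (pb_def hP (pb_mem hP j) kin).
- move=> j; case: (HW _ (pb_mem hP j)) => _ W0 _ ->.
  rewrite big_mkcond; apply: eq_bigr => k _.
  case: eqP => [->//|/eqP kj]; rewrite W0 ?scale0r //.
  by apply: contra kj => kin; rewrite (pb_def hP (pb_mem hP j) kin).
Qed.

Lemma sum_lab (P : {set {set 'I_n}}) (V : Type) (F : 'I_n -> V) i B (W : {set 'I_n}) :
  forall (zero : V) (add : Monoid.com_law zero), F i = zero ->
  \big[add/zero]_(k | lab P i B k == W) F k = \big[add/zero]_(k | pblock P k == W) F k.
Proof.
move=> zero add Fi; rewrite big_mkcond [RHS]big_mkcond; apply: eq_bigr => k _.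
case: (eqVneq k i) => [->|ki]; first by rewrite Fi; do 2 case: ifP.
by rewrite /lab (negbTE ki).
Qed.

Lemma G_transfer (P : {set {set 'I_n}}) l x i B : partition P setT ->
  feas (pblock P) l x -> l i = 0 -> B \in P -> feas (lab P i B) l x.
Proof.
move=> hP [l0 l1 lx] li PB; case: (P_nonempty hP PB) => b Bb.
have Eb := pb_def hP PB Bb.
have Hj : forall j, exists j', lab P i B j = pblock P j'.
  move=> j; rewrite /lab; case: eqP => _; first by exists b.
  by exists j.
split => // j; case: (Hj j) => j' ->.
- by rewrite (@sum_lab P R l i B _ 0 +%R li) l1.
- by rewrite (@sum_lab P _ (fun k => l k *: p k) i B _ 0 +%R) ?li ?scale0r // lx.
Qed.

Lemma G_step g l x m y : feas g l x -> kern g m y ->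
  (exists i, 0 < m i) -> (forall i, 0 < m i -> 0 < l i) ->
  exists t, 0 < t /\ exists i0,
    [/\ 0 < m i0, l i0 - t * m i0 = 0 &
        feas g (fun k => l k - t * m k) (x - t *: y)].
Proof.
move=> [l0 l1 lx] [m0 my] [i1 mi1] Hpos.
case: (@arg_minP _ _ _ i1 (fun k => 0 < m k) (fun k => l k / m k) mi1).
move=> i0 mi0 Hmin.
have li0 := Hpos _ mi0.
exists (l i0 / m i0); split; first by rewrite divr_gt0.
exists i0; split => //.
  by rewrite divfK ?subrr // gt_eqF.
split.
- move=> k; rewrite subr_ge0; case: (ltP 0 (m k)) => mk.
    by rewrite -ler_pdivlMr //; apply: Hmin.
  apply: le_trans (l0 k); apply: mulr_ge0_le0 => //.
  by rewrite divr_ge0 // ltW.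
- by move=> j; rewrite sumrB -mulr_sumr l1 m0 mulr0 subr0.
- move=> j; rewrite (eq_bigr (fun k => l k *: p k - (l i0 / m i0) *: (m k *: p k))).
    by rewrite sumrB -scaler_sumr lx my.
  by move=> k _; rewrite scalerBl scalerA.
Qed.

Lemma LA (U E : finType) (F : E -> U -> R) : (#|E| < #|U|)%N ->
  exists v : U -> R, (exists u, v u != 0) /\ forall e, \sum_u v u * F e u = 0.
Proof.
move=> cEU.
pose M : 'M[R]_(#|U|, #|E|) := \matrix_(i, j) F (enum_val j) (enum_val i).
have : kermx M != 0.
  rewrite -mxrank_eq0 mxrank_ker -lt0n subn_gt0.
  exact: leq_ltn_trans (rank_leq_col M) cEU.
case/rowV0Pn => w; rewrite sub_kermx => /eqP Hw /rV0Pn [j wj].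
exists (fun u => w 0 (enum_rank u)); split.
  by exists (enum_val j); rewrite enum_valK.
move=> e; move/matrixP: Hw => /(_ 0 (enum_rank e)); rewrite !mxE => H; rewrite -[X in _ = X]H.
rewrite (reindex (@enum_val U U)) /=; last first.
  by apply: onW_bij; apply: enum_val_bij.
apply: eq_bigr => k _; rewrite enum_valK !mxE enum_rankK //.
Qed.

Lemma sum_nat_ind (a : 'I_n -> R) (b : pred 'I_n) :
  \sum_k a k * (b k)%:R = \sum_(k | b k) a k.
Proof. by rewrite [RHS]big_mkcond; apply: eq_bigr => k _; case: (b k); rewrite ?mulr1 ?mulr0. Qed.

Lemma G_dim (P : {set {set 'I_n}}) (r : nat) (S : {set 'I_n}) :
  partition P setT -> #|P| = r -> (0 < r)%N -> (Tv d r < #|S|)%N ->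
  exists m y, [/\ kern (pblock P) m y, exists k, m k != 0 &
                  forall k, k \notin S -> m k = 0].
Proof.
move=> hP cP r0 cS.
pose U : finType := ('I_n + 'I_d)%type.
pose E : finType := ({B : {set 'I_n} | B \in P} * option 'I_d + {k : 'I_n | k \notin S})%type.
pose F : E -> U -> R := fun e u =>
  match e, u with
  | inl (B, None), inl k => (k \in val B)%:R
  | inl (B, None), inr _ => 0
  | inl (B, Some c), inl k => (k \in val B)%:R * p k 0 c
  | inl (B, Some c), inr c' => - (c' == c)%:R
  | inr k0, inl k => (k == val k0)%:R
  | inr _, inr _ => 0
  end.
have cE : #|E| = (r * d.+1 + (n - #|S|))%N.
  rewrite /E card_sum card_prod card_option !card_sig card_ord.
  have -> : #|[pred B : {set 'I_n} | B \in P]| = r by rewrite -cP.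
  have -> : #|[pred k : 'I_n | k \notin S]| = #|~: S|.
    by apply: eq_card => k; rewrite !inE.
  have HC : (#|S| + #|~: S| = n)%N by rewrite cardsC card_ord.
  lia.
have cU : #|U| = (n + d)%N by rewrite card_sum !card_ord.
have cSn : (#|S| <= n)%N by have := max_card S; rewrite card_ord.
have : (#|E| < #|U|)%N.
  rewrite cE cU; move: cS; rewrite /Tv.
  case: r r0 {cP cE} => // r' _; rewrite subn1 /=.
  move=> cS2; rewrite (_ : (r'.+1 * d.+1 = d.+1 * r' + d.+1)%N); last by rewrite mulnC mulnS addnC.
  move: (d.+1 * r')%N cS2 cSn => X; move: #|S| => s; lia.
case/(LA F) => v [[u vu] Hv].
pose m k := v (inl k).
have HS k : k \notin S -> m k = 0.
  move=> kS; have := Hv (inr (exist _ k kS)); rewrite big_sumType /=.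
  rewrite [X in _ + X]big1 => [|c _]; last by rewrite mulr0.
  rewrite addr0 (bigD1 k) //= eqxx mulr1 big1 ?addr0 // => k' /negbTE ->.
  by rewrite mulr0.
have EqN B (PB : B \in P) : \sum_(k | k \in B) m k = 0.
  have := Hv (inl (exist _ B PB, None)); rewrite big_sumType /=.
  rewrite [X in _ + X]big1 => [|c _]; last by rewrite mulr0.
  by rewrite addr0 sum_nat_ind.
have EqS B (PB : B \in P) c : \sum_(k | k \in B) m k * p k 0 c = v (inr c).
  have := Hv (inl (exist _ B PB, Some c)); rewrite big_sumType /=.
  rewrite [X in _ + X](bigD1 c) //= eqxx mulrN1.
  rewrite [X in _ + (_ + X)]big1 => [|c' /negbTE ->]; last by rewrite oppr0 mulr0.
  rewrite addr0.
  move/eqP; rewrite subr_eq0 => /eqP <-.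
  rewrite big_mkcond; apply: eq_bigr => k _; rewrite /m; case: (k \in B) => /=.
    by rewrite mul1r.
  by rewrite mul0r mulr0.

have memP j k : (k \in pblock P j) = (pblock P k == pblock P j).
  have [/eqP cov ti _] := and3P hP.
  by rewrite eq_sym eq_pblock // cov inE.
exists m, (\row_c v (inr c)); split.
- split => j.
    by rewrite -[RHS](EqN _ (pb_mem hP j)); apply: eq_bigl => k; rewrite memP.
  apply/rowP => c; rewrite summxE mxE -(EqS _ (pb_mem hP j)).
  apply: eq_big => k; first by rewrite memP.
  by rewrite mxE.
- case: u vu => [k|c] vu; first by exists k.
  case: (boolP [exists k, m k != 0]) => [/existsP //|].
  rewrite negb_exists => /forallP m0.
  have : (0 < #|P|)%N by rewrite cP.
  rewrite card_gt0 => /set0Pn [B PB].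
  move: vu; rewrite -(EqS _ PB) big1 ?eqxx // => k _.
  by move: (m0 k); rewrite negbK => /eqP ->; rewrite mul0r.
- exact: HS.
Qed.

End Geo.

Section Core.
Local Open Scope ring_scope.
Variables (R : realType) (d n : nat) (p : 'I_n -> 'rV[R]_d).
Variable P : {set {set 'I_n}}.
Hypothesis hP : partition P setT.

Definition supp (l : 'I_n -> R) := [set k | l k != 0].

Lemma POS m y k0 : kern p (pblock P) m y -> m k0 < 0 -> exists k, 0 < m k.
Proof.
case=> m0 _ mk0.
case: (boolP [exists k, 0 < m k]) => [/existsP //|].
rewrite negb_exists => /forallP Hn.
have := m0 k0; rewrite (bigD1 k0) //=.
move=> E; have : m k0 + \sum_(i | (pblock P i == pblock P k0) && (i != k0)) m i < 0.
  apply: (@le_lt_trans _ _ (m k0 + 0)); last by rewrite addr0.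
  rewrite lerD2l; apply: sumr_le0 => i _; by rewrite leNgt (negbTE (Hn i)).
by rewrite E ltxx.
Qed.

Lemma kernN m y : kern p (pblock P) m y -> kern p (pblock P) (fun k => - m k) (- y).
Proof.
case=> m0 my; split => j; first by rewrite sumrN m0 oppr0.
by rewrite -(my j) -sumrN; apply: eq_bigr => k _; rewrite scaleNr.
Qed.

Lemma Red l x m y : feas p (pblock P) l x -> kern p (pblock P) m y ->
  (exists k, m k != 0) -> (forall k, l k = 0 -> m k = 0) ->
  exists l' x', feas p (pblock P) l' x' /\ (#|supp l'| < #|supp l|)%N.
Proof.
move=> fl km [k0 mk0] Hs.
have [m' [y' [km' Hpos Hs']]] : exists m' y', [/\ kern p (pblock P) m' y',
     exists k, 0 < m' k & forall k, l k = 0 -> m' k = 0].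
  exists m, y; split => //.
  case: (ltgtP (m k0) 0) => [mneg|mpos|m0]; last by rewrite m0 eqxx in mk0.
    exact: POS km mneg.
  by exists k0.
have Hc : forall i, 0 < m' i -> 0 < l i.
  move=> i mi; case: fl => l0 _ _; rewrite lt_neqAle l0 andbT eq_sym.
  by apply/eqP => /Hs' mi0; rewrite mi0 ltxx in mi.
case: (G_step fl km' Hpos Hc) => t [t0 [i0 [mi0 li0 fl']]].
exists (fun k => l k - t * m' k), (x - t *: y'); split => //.
have i0s : i0 \in supp l by rewrite inE; apply/eqP => /Hs' m0; rewrite m0 ltxx in mi0.
rewrite (cardsD1 i0 (supp l)) i0s add1n ltnS; apply: subset_leq_card.
apply/subsetP => k; rewrite !inE; case: (eqVneq k i0) => [->|ki0].
  by rewrite li0 eqxx.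
by apply: contraNN => /eqP lk0; rewrite lk0 Hs' // mulr0 subr0.
Qed.

Lemma G_core (r : nat) : #|P| = r -> (0 < r)%N -> (Tv d r < n)%N ->
  (exists l x, feas p (pblock P) l x) ->
  exists C : {set 'I_n}, (#|C| <= Tv d r - 1)%N /\
    forall i, i \notin C -> exists l x, feas p (pblock P) l x /\ l i = 0.
Proof.
move=> cP r0 Tn [l0 [x0 fl0]].
suff H : forall N l x, (#|supp l| <= N)%N -> feas p (pblock P) l x ->
  exists C : {set 'I_n}, (#|C| <= Tv d r - 1)%N /\
    forall i, i \notin C -> exists l x, feas p (pblock P) l x /\ l i = 0.
  exact: (H _ l0 x0 (leqnn _) fl0).
elim=> [|N IH] l x cl fl.
  exists set0; rewrite cards0; split => // i _; exists l, x; split => //.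
  move: cl; rewrite leqn0 cards_eq0 => /eqP /setP /(_ i); rewrite !inE.
  by move/negbT; rewrite negbK => /eqP.
case: (EM (exists m y, [/\ kern p (pblock P) m y, exists k, m k != 0 &
                              forall k, l k = 0 -> m k = 0])).
  case=> m [y [km mnz Hs]].
  case: (Red fl km mnz Hs) => l' [x' [fl' cl']].
  by apply: (IH l' x') => //; rewrite -ltnS (leq_trans cl').
move=> NoA.
have suppl0 k : k \notin supp l -> l k = 0 by rewrite inE negbK => /eqP.
have cT : (#|supp l| <= Tv d r)%N.
  rewrite leqNgt; apply/negP => cS.
  case: (G_dim p hP cP r0 cS) => m [y [km mnz Hs]].
  apply: NoA; exists m, y; split => // k lk; apply: Hs.
  by rewrite inE lk eqxx.
case: (ltnP #|supp l| (Tv d r)) => cT'.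
  exists (supp l); split; first by rewrite leq_subRL // ?add1n // /Tv.
  by move=> i /suppl0 li; exists l, x.
have cE : #|supp l| = Tv d r by apply/eqP; rewrite eqn_leq cT cT'.
have [z zS] : exists z, z \notin supp l.
  case: (boolP [exists z, z \notin supp l]) => [/existsP //|].
  rewrite negb_exists => /forallP Hz.
  have : (n <= #|supp l|)%N.
    have -> : supp l = setT by apply/setP => k; move: (Hz k); rewrite !inE negbK => ->.
    by rewrite cardsT card_ord.
  by rewrite cE leqNgt Tn.
have cS : (Tv d r < #|z |: supp l|)%N by rewrite cardsU1 zS cE.
case: (G_dim p hP cP r0 cS) => m [y [km mnz Hs]].
have mz : m z != 0.
  apply/negP => /eqP mz; apply: NoA; exists m, y; split => // k lk.
  case: (eqVneq k z) => [->//|kz]; apply: Hs.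
  by rewrite !inE negb_or kz lk eqxx.
have [m' [y' [km' mz' Hs']]] : exists m' y', [/\ kern p (pblock P) m' y', m' z < 0 &
    forall k, k \notin z |: supp l -> m' k = 0].
  case: (ltgtP (m z) 0) => [mneg|mpos|m0]; last by rewrite m0 eqxx in mz.
    by exists m, y.
  exists (fun k => - m k), (- y); split; first exact: kernN.
    by rewrite oppr_lt0.
  by move=> k /Hs ->; rewrite oppr0.
have Hpos := POS km' mz'.
have Hc : forall i, 0 < m' i -> 0 < l i.
  move=> i mi; case: fl => l0' _ _; rewrite lt_neqAle l0' andbT eq_sym.
  have : i \in z |: supp l by apply: contraLR mi => /Hs' ->; rewrite ltxx.
  rewrite !inE; case: (eqVneq i z) => [iz|] /=; last by [].
  by subst i; rewrite ltNge ltW in mi.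
case: (G_step fl km' Hpos Hc) => t [t0 [i0 [mi0 li0 fl']]].
have i0s : i0 \in supp l by rewrite inE gt_eqF // Hc.
exists (supp l :\ i0); split.
  have := cardsD1 i0 (supp l); rewrite i0s cE; move: (#|supp l :\ i0|) (Tv d r) => c T; lia.
move=> i; rewrite !inE negb_and negbK => /orP[/eqP ->|li].
  by exists (fun k => l k - t * m' k), (x - t *: y').
by exists l, x; split => //; apply/eqP; rewrite -[_ == _]negbK.
Qed.

End Core.

Lemma card_pairs n (P : {set {set 'I_n}}) (r : nat) (C : {set 'I_n}) :
  partition P setT -> #|P| = r ->
  #|[set x : 'I_n * {set 'I_n} | (x.1 \in C) && (x.2 \in P :\ pblock P x.1)]| =
  (#|C| * (r - 1))%N.
Proof.
move=> hP cP; rewrite -sum1_card.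
rewrite (eq_bigl (fun x : 'I_n * {set 'I_n} => (x.1 \in C) && (x.2 \in P :\ pblock P x.1)));
  last by move=> x; rewrite inE.
rewrite -(pair_big_dep (fun i => i \in C) (fun i B => B \in P :\ pblock P i) (fun _ _ => 1%N)) /=.
rewrite -sum_nat_const; apply: eq_bigr => i _; rewrite sum1_card.
by have := cardsD1 (pblock P i) P; rewrite pb_mem // cP add1n => ->; rewrite subn1.
Qed.

Lemma exists_partner (R : realType) d n (p : 'I_n -> 'rV[R]_d) (P : {set {set 'I_n}}) l x i :
  feas p (pblock P) l x -> l i = 0%R -> exists a, a != i /\ pblock P a = pblock P i.
Proof.
case=> _ l1 _ li.
case: (boolP [exists a, (a != i) && (pblock P a == pblock P i)]).
  by case/existsP => a /andP[ai /eqP E]; exists a.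
rewrite negb_exists => /forallP Hn.
have := l1 i; rewrite (bigD1 i) //= li big1 ?addr0 => [|k /andP[E ki]].
  by move=> /esym /eqP; rewrite oner_eq0.
by have := Hn k; rewrite ki E.
Qed.

Theorem theorem1p5 (R : realType) (d r n : nat) (p : 'I_n -> 'rV[R]_d) :
  (0 < r)%N -> (0 < d)%N -> injective p -> (Tv d r < n)%N ->
  forall P : {set {set 'I_n}}, tverberg_partition p r P ->
    ((n.+1 - Tv d r) * (r - 1) <= tv_degree p r P <= n * (r - 1))%N.
Proof.
move=> r0 d0 _ Tn P [/andP[hP /eqP cP] Hx].
rewrite /tv_degree; set N := [set Q | _].
apply/andP; split.
- have [l [x fl]] := G_init hP Hx.
  have [C [cC HC]] := G_core hP cP r0 Tn (ex_intro _ l (ex_intro _ x fl)).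
  set Pairs := [set x : 'I_n * {set 'I_n} | (x.1 \in ~: C) && (x.2 \in P :\ pblock P x.1)].
  have partner : forall i, i \notin C -> exists a, a != i /\ pblock P a = pblock P i.
    by move=> i /HC [l' [x' [fl' li]]]; exact: exists_partner fl' li.
  have : #|[set preim_partition (lab P x.1 x.2) setT | x in Pairs]| = #|Pairs|.
    apply: card_in_imset => [[i B] [j B']]; rewrite !inE /= => /andP[iC /andP[BPi PB]].
    move=> /andP[jC /andP[BPj PB']] E.
    have [a [ai Ea]] := partner _ iC.
    have iB : i \notin B by apply: contra BPi => iB; rewrite (pb_def hP PB iB).
    have jB' : j \notin B' by apply: contra BPj => jB; rewrite (pb_def hP PB' jB).
    by case: (move_inj hP PB iB ai Ea PB' jB' E) => -> ->.
  rewrite (card_pairs _ hP cP) => E.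
  apply: leq_trans (_ : #|[set preim_partition (lab P x.1 x.2) setT | x in Pairs]| <= #|N|)%N.
    rewrite E; apply: leq_mul => //.
    have HC2 : (#|C| + #|~: C| = n)%N by rewrite cardsC card_ord.
    have T1 : (0 < Tv d r)%N by [].
    move: cC HC2 T1; move: #|C| #|~: C| (Tv d r) => c c2 T; lia.
  apply: subset_leq_card; apply/subsetP => Q /imsetP[[i B]].
  rewrite !inE /= => /andP[iC /andP[BPi PB]] ->.
  have [a [ai Ea]] := partner _ iC.
  have iB : i \notin B by apply: contra BPi => iB; rewrite (pb_def hP PB iB).
  have [l' [x' [fl' li]]] := HC _ iC.
  rewrite (move_dist hP PB iB ai Ea) eqxx andbT; apply/asboolP; split.
    rewrite /is_rpartition preim_partitionP /= card_ppart (lab_img hP PB ai Ea) cP //.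
  exists x'; apply: G_fin; exact: G_transfer hP fl' li PB.
- apply: leq_trans (_ : #|[set preim_partition (lab P x.1 x.2) setT |
      x in [set x : 'I_n * {set 'I_n} | (x.1 \in setT) && (x.2 \in P :\ pblock P x.1)]]| <= _)%N.
    apply: subset_leq_card; apply/subsetP => Q; rewrite inE => /andP[/asboolP [/andP[hQ /eqP cQ] _] /eqP dQ].
    rewrite -cP in cQ.
    have [i [B [HB EQ]]] := move_char hP hQ cQ dQ.
    apply/imsetP; exists (i, B) => //; rewrite inE /= in_setT HB.
    by [].
  apply: leq_trans (leq_imset_card _ _) _.

  by rewrite (card_pairs _ hP cP) cardsT card_ord.
Qed.
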